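(* Let $\mathbf X=\{X_n\}$ and $\mathbf Y=\{Y_n\}$ be general sources. If $\mathbf X$ is an approximating source for $\mathbf Y$, then $$\inf_{0<\epsilon<1}\ \liminf_{n\to\infty}\ \inf_{0\le\delta<1-\epsilon}\{c_n^x(\delta+\epsilon)-c_n^y(\delta)\}\ \ge 0 .$$
   Context: Logarithms are natural. A general source $\mathbf X=\{X_n\}_{n\ge1}$ is a sequence of random variables, $X_n$ taking values in a countable set $\mathcal X_n$, with no consistency requirements between different $n$. Similarly $Y_n$ takes values in a countable set $\mathcal Y_n$. For a random variable $Z$ on a countable set $\mathcal Z$ with pmf $P_Z$, list the elements of positive probability as $z_1,z_2,\dots$ (a finite or countably infinite list) with $P_Z(z_1)\ge P_Z(z_2)\ge\cdots$ (ties broken arbitrarily). Set $\delta_0=0$ and $\delta_k=\sum_{i\le k}P_Z(z_i)$. For $\delta\in[0,1)$ define $c^z(\delta)=\log\frac{1}{P_Z(z_k)}$, where $k$ is the unique index with $\delta\in[\delta_{k-1},\delta_k)$. Here $c_n^x$ and $c_n^y$ denote this function built from $P_{X_n}$ and from $P_{Y_n}$ respectively. The variational distance is $d(P,Q)=\sum_a|P(a)-Q(a)|$. $\mathbf X$ is an approximating source for $\mathbf Y$ if there exist deterministic maps $\phi_n:\mathcal X_n\to\mathcal Y_n$ with $\lim_{n\to\infty}d(P_{Y_n},P_{\phi_n(X_n)})=0$. *)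

(* Defs.v *)
From Stdlib Require Import Reals Lra Lia Classical ClassicalEpsilon.
Open Scope R_scope.

(* Alphabets: every countable alphabet is identified with (a subset of) nat,
   letters outside the alphabet carrying probability 0.  A pmf on nat: *)
Definition is_pmf (P : nat -> R) : Prop :=
  (forall a, 0 <= P a) /\ infinite_sum P 1.

Definition series_sum (s : nat -> R) : R :=
  epsilon (inhabits 0) (fun l => infinite_sum s l).

Definition var_dist (P Q : nat -> R) : R :=
  series_sum (fun a => Rabs (P a - Q a)).

Definition push (P : nat -> R) (phi : nat -> nat) (b : nat) : R :=
  series_sum (fun a => if Nat.eq_dec (phi a) b then P a else 0).

Definition approximating (PX PY : nat -> nat -> R) : Prop :=
  exists phi : nat -> nat -> nat,
    Un_cv (fun n => var_dist (PY n) (push (PX n) (phi n))) 0.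

Fixpoint psum (f : nat -> R) (k : nat) : R :=
  match k with
  | O => 0
  | S k' => psum f k' + f k'
  end.

(* Index validity for an enumeration of length L (None = infinite). *)
Definition valid_idx (L : option nat) (i : nat) : Prop :=
  match L with None => True | Some m => (i < m)%nat end.

(* z 0, z 1, ... (0-based; z i is the paper's z_(i+1)) lists the elements of
   positive probability of P, each exactly once, in non-increasing order of
   probability (ties broken arbitrarily). *)
Definition is_decr_enum (P : nat -> R) (L : option nat) (z : nat -> nat) : Prop :=
  (forall i j, valid_idx L i -> valid_idx L j -> z i = z j -> i = j) /\
  (forall i, valid_idx L i -> 0 < P (z i)) /\
  (forall a, 0 < P a -> exists i, valid_idx L i /\ z i = a) /\
  (forall i, valid_idx L (S i) -> P (z (S i)) <= P (z i)).

(* c^z(delta) = log (1 / P(z_k)) where delta_(k-1) <= delta < delta_k,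
   delta_k = sum_(i<=k) P(z_i) (here with 0-based index i = k-1). *)
Definition cfun (P : nat -> R) (L : option nat) (z : nat -> nat) (delta : R) : R :=
  ln (/ P (z (epsilon (inhabits 0%nat)
    (fun i => valid_idx L i /\
              psum (fun j => P (z j)) i <= delta < psum (fun j => P (z j)) (S i))))).

(* Main.v *)
Require Import Defs.
From Stdlib Require Import Reals.
From Stdlib Require Import Lra Lia List ClassicalEpsilon Classical Arith Compare_dec.
Open Scope R_scope.

Fixpoint lsum (f : nat -> R) (l : list nat) : R :=
  match l with nil => 0 | a :: l' => f a + lsum f l' end.

Lemma lsum_app f l1 l2 : lsum f (l1 ++ l2) = lsum f l1 + lsum f l2.
Proof. induction l1; simpl; [lra|]. rewrite IHl1; lra. Qed.

Lemma lsum_nonneg f l : (forall a, 0 <= f a) -> 0 <= lsum f l.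
Proof. intros H; induction l; simpl; [lra|]. specialize (H a); lra. Qed.

Lemma lsum_incl f l1 : (forall a, 0 <= f a) -> forall l2, NoDup l1 -> NoDup l2 ->
  incl l1 l2 -> lsum f l1 <= lsum f l2.
Proof.
  intros Hf. induction l1 as [|a l1 IH]; intros l2 H1 H2 Hi; simpl.
  - apply lsum_nonneg; auto.
  - assert (Ha: In a l2) by (apply Hi; left; auto).
    destruct (in_split _ _ Ha) as [x [y ->]].
    rewrite lsum_app; simpl.
    assert (IH' : lsum f l1 <= lsum f (x ++ y)).
    { apply IH.
      - inversion H1; auto.
      - eapply NoDup_remove_1; eauto.
      - intros b Hb. assert (Hb2: In b (x ++ a :: y)) by (apply Hi; right; auto).
        inversion H1; subst. apply in_app_or in Hb2; apply in_or_app.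
        destruct Hb2 as [Hb2|[Hb2|Hb2]]; auto. subst. contradiction. }
    rewrite lsum_app in IH'. lra.
Qed.

Lemma lsum_map f g l : lsum f (map g l) = lsum (fun i => f (g i)) l.
Proof. induction l; simpl; auto. rewrite IHl; auto. Qed.

Lemma lsum_ext f g l : (forall a, f a = g a) -> lsum f l = lsum g l.
Proof. intros H; induction l; simpl; auto. rewrite IHl, H; auto. Qed.

Lemma psum_lsum f k : psum f k = lsum f (seq 0 k).
Proof. induction k; [reflexivity|]. cbn [psum]. rewrite seq_S, lsum_app; simpl. rewrite IHk. lra. Qed.

Lemma lsum_filter f (pb : nat -> bool) l : lsum (fun b => if pb b then f b else 0) l = lsum f (filter pb l).
Proof. induction l; simpl; auto. destruct (pb a); simpl; rewrite IHl; lra. Qed.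

Lemma psum_ext f g k : (forall a, f a = g a) -> psum f k = psum g k.
Proof. intros H; induction k; simpl; auto. rewrite IHk, H; auto. Qed.

Lemma psum_nonneg f k : (forall a, 0 <= f a) -> 0 <= psum f k.
Proof. intros H; induction k; simpl; [lra|]. specialize (H k); lra. Qed.

Lemma psum_le f g k : (forall a, (a < k)%nat -> f a <= g a) -> psum f k <= psum g k.
Proof. intros H; induction k; simpl; [lra|].
  assert (f k <= g k) by (apply H; lia).
  assert (psum f k <= psum g k) by (apply IHk; intros; apply H; lia). lra. Qed.

Lemma psum_plus f g k : psum (fun i => f i + g i) k = psum f k + psum g k.
Proof. induction k; simpl; [lra|]. rewrite IHk; lra. Qed.

Lemma psum_scal r f k : psum (fun i => r * f i) k = r * psum f k.
Proof. induction k; simpl; [lra|]. rewrite IHk; lra. Qed.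

Lemma psum_mono f k k' : (forall a, 0 <= f a) -> (k <= k')%nat -> psum f k <= psum f k'.
Proof. intros H Hk; induction Hk; simpl; [lra|]. specialize (H m); lra. Qed.

Lemma psum_swap (F : nat -> nat -> R) M K :
  psum (fun b => psum (fun i => F b i) K) M = psum (fun i => psum (fun b => F b i) M) K.
Proof.
  induction M; simpl.
  - induction K; simpl; [lra|]. rewrite <- IHK; lra.
  - rewrite IHM, <- psum_plus. reflexivity.
Qed.

Lemma psum_delta x c M :
  psum (fun b => if Nat.eq_dec x b then c else 0) M = if lt_dec x M then c else 0.
Proof.
  induction M; simpl.
  - destruct (lt_dec x 0); [lia|lra].
  - rewrite IHM. destruct (Nat.eq_dec x M), (lt_dec x M), (lt_dec x (S M)); try lia; lra.
Qed.

Lemma sum_f_psum s n : sum_f_R0 s n = psum s (S n).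
Proof. induction n; simpl; [lra|]. rewrite IHn; simpl; lra. Qed.

Lemma psum_le_lim s l : (forall a, 0 <= s a) -> infinite_sum s l -> forall M, psum s M <= l.
Proof.
  intros Hs Hl M. destruct (Rle_dec (psum s M) l) as [|H]; auto. exfalso.
  destruct (Hl (psum s M - l)) as [N HN]; [lra|].
  specialize (HN (N + M)%nat ltac:(lia)). rewrite sum_f_psum in HN. unfold R_dist in HN.
  assert (psum s M <= psum s (S (N+M))) by (apply psum_mono; auto; lia).
  apply Rabs_def2 in HN. lra.
Qed.

Lemma series_conv s B : (forall a, 0 <= s a) -> (forall M, psum s M <= B) ->
  infinite_sum s (series_sum s).
Proof.
  intros Hs HB. unfold series_sum. apply epsilon_spec.
  destruct (growing_cv (sum_f_R0 s)) as [l Hl].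
  - intro n. simpl. specialize (Hs (S n)). lra.
  - exists B. intros x [i ->]. rewrite sum_f_psum. apply HB.
  - exists l. exact Hl.
Qed.

Lemma cv_psum (u : nat -> nat -> R) (l : nat -> R) M :
  (forall b, Un_cv (u b) (l b)) -> Un_cv (fun N => psum (fun b => u b N) M) (psum l M).
Proof.
  intros H. induction M; simpl.
  - intros e He; exists 0%nat; intros n Hn; simpl. unfold Rdist; rewrite Rminus_0_r, Rabs_R0; lra.
  - apply (CV_plus (fun N => psum (fun b => u b N) M) (u M)); auto.
Qed.

Definition sel (P : nat -> R) (phi : nat -> nat) (b a : nat) : R :=
  if Nat.eq_dec (phi a) b then P a else 0.

Lemma pmf_psum P : is_pmf P -> forall M, psum P M <= 1.
Proof. intros [H1 H2]. apply psum_le_lim; auto. Qed.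

Lemma sel_nonneg P phi b : is_pmf P -> forall a, 0 <= sel P phi b a.
Proof. intros [H _] a. unfold sel. destruct Nat.eq_dec; auto; lra. Qed.

Lemma push_conv P phi b : is_pmf P -> infinite_sum (sel P phi b) (push P phi b).
Proof.
  intros HP. unfold push. apply (series_conv _ 1).
  - apply sel_nonneg; auto.
  - intros M. eapply Rle_trans; [|apply (pmf_psum P HP M)].
    apply psum_le. intros a _. unfold sel. destruct HP as [H _].
    destruct Nat.eq_dec; [lra|apply H].
Qed.

Lemma push_nonneg P phi b : is_pmf P -> 0 <= push P phi b.
Proof. intros HP. apply (psum_le_lim _ _ (sel_nonneg P phi b HP) (push_conv P phi b HP) 0). Qed.

Lemma push_psum P phi : is_pmf P -> forall M, psum (push P phi) M <= 1.
Proof.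
  intros HP M.
  assert (Hc : Un_cv (fun N => psum (fun b => sum_f_R0 (sel P phi b) N) M) (psum (push P phi) M)).
  { apply cv_psum. intros b. apply push_conv; auto. }
  assert (H1 : Un_cv (fun _ => 1) 1).
  { intros e He; exists 0%nat; intros; unfold Rdist; rewrite Rminus_diag, Rabs_R0; lra. }
  eapply Rle_cv_lim; [|exact Hc|exact H1].
  intro N; cbv beta.
  rewrite (psum_ext _ (fun b => psum (fun a => sel P phi b a) (S N))).
  2:{ intros b. apply sum_f_psum. }
  rewrite psum_swap.
  eapply Rle_trans; [|apply (pmf_psum P HP (S N))].
  apply psum_le. intros a _. unfold sel. rewrite psum_delta.
  destruct HP as [H _]. destruct lt_dec; [lra|apply H].
Qed.

Lemma vd_conv Q P phi : is_pmf Q -> is_pmf P ->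
  infinite_sum (fun b => Rabs (Q b - push P phi b)) (var_dist Q (push P phi)).
Proof.
  intros HQ HP. unfold var_dist. apply (series_conv _ 2).
  - intros; apply Rabs_pos.
  - intros M. eapply Rle_trans.
    + apply (psum_le _ (fun b => Q b + push P phi b)).
      intros a _. assert (0 <= Q a) by (apply HQ).
      assert (0 <= push P phi a) by (apply push_nonneg; auto).
      unfold Rabs; destruct Rcase_abs; lra.
    + rewrite psum_plus. pose proof (pmf_psum Q HQ M). pose proof (push_psum P phi HP M). lra.
Qed.

Lemma valid_down L i j : valid_idx L j -> (i <= j)%nat -> valid_idx L i.
Proof. destruct L; simpl; auto; lia. Qed.

Lemma enum_decr P L z : is_decr_enum P L z -> forall k, valid_idx L k ->
  forall i, (i <= k)%nat -> P (z k) <= P (z i).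
Proof.
  intros [_ [_ [_ Hd]]]. induction k; intros Hk i Hi.
  - replace i with 0%nat by lia; lra.
  - destruct (Nat.eq_dec i (S k)) as [->|Hne]; [lra|].
    specialize (Hd k Hk). assert (valid_idx L k) by (apply (valid_down L k (S k)); auto).
    specialize (IHk H i ltac:(lia)). lra.
Qed.

Lemma bound_exists (g : nat -> nat) K : exists M, forall i, (i < K)%nat -> (g i < M)%nat.
Proof.
  induction K.
  - exists 0%nat; intros; lia.
  - destruct IHK as [M HM]. exists (Nat.max M (S (g K))). intros i Hi.
    destruct (Nat.eq_dec i K) as [->|]; [lia|]. specialize (HM i ltac:(lia)). lia.
Qed.

Lemma enum_nodup P L z K : is_decr_enum P L z -> (forall i, (i < K)%nat -> valid_idx L i) ->
  NoDup (map z (seq 0 K)).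
Proof.
  intros [Hi _] HK. apply NoDup_map_NoDup_ForallPairs; [|apply seq_NoDup].
  intros a b Ha Hb. apply in_seq in Ha, Hb. apply Hi; apply HK; lia.
Qed.

Lemma enum_cover P L z : is_decr_enum P L z -> forall M, exists K,
  (forall i, (i < K)%nat -> valid_idx L i) /\
  forall a, (a < M)%nat -> 0 < P a -> exists i, (i < K)%nat /\ z i = a.
Proof.
  intros HE. destruct HE as [_ [_ [Hc _]]]. induction M.
  - exists 0%nat; split; intros; lia.
  - destruct IHM as [K [HK1 HK2]].
    destruct (Rlt_dec 0 (P M)) as [Hp|Hp].
    + destruct (Hc M Hp) as [i [Hv Hz]].
      exists (Nat.max K (S i)). split.
      * intros i' Hi'. destruct (lt_dec i' K); [apply HK1; auto|].
        apply (valid_down L i' i); auto; lia.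
      * intros a Ha Hpa. destruct (Nat.eq_dec a M) as [->|].
        -- exists i; split; auto; lia.
        -- destruct (HK2 a ltac:(lia) Hpa) as [i' [? ?]]. exists i'; split; auto; lia.
    + exists K. split; auto. intros a Ha Hpa. destruct (Nat.eq_dec a M) as [->|].
      * contradiction.
      * apply HK2; auto; lia.
Qed.

Lemma enum_total P L z : is_pmf P -> is_decr_enum P L z -> forall t, t < 1 ->
  exists K, (forall i, (i < K)%nat -> valid_idx L i) /\ t < psum (fun j => P (z j)) K.
Proof.
  intros HP HE t Ht. destruct HP as [Hnn Hs].
  destruct (Hs (1 - t)) as [N HN]; [lra|].
  specialize (HN N (le_n _)). rewrite sum_f_psum in HN. unfold R_dist in HN.
  apply Rabs_def2 in HN.
  destruct (enum_cover P L z HE (S N)) as [K [HK1 HK2]].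
  exists K. split; auto.
  set (pb := fun a => if Rlt_dec 0 (P a) then true else false).
  assert (psum P (S N) <= psum (fun j => P (z j)) K).
  { rewrite !psum_lsum.
    rewrite (lsum_ext P (fun b => if pb b then P b else 0)).
    2:{ intros a. unfold pb. destruct Rlt_dec; auto. specialize (Hnn a); lra. }
    rewrite lsum_filter, <- (lsum_map P z).
    apply lsum_incl; auto.
    - apply NoDup_filter, seq_NoDup.
    - apply (enum_nodup P L z K HE HK1).
    - intros a Ha. apply filter_In in Ha. destruct Ha as [Ha Hb].
      apply in_seq in Ha. unfold pb in Hb. destruct Rlt_dec as [Hp|]; [|discriminate].
      destruct (HK2 a ltac:(lia) Hp) as [i [Hi Hz]].
      apply in_map_iff. exists i. split; auto. apply in_seq. lia. }
  lra.
Qed.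

Lemma find_idx (g : nat -> R) t : 0 <= t -> forall K, t < psum g K ->
  exists i, (S i <= K)%nat /\ psum g i <= t < psum g (S i).
Proof.
  intros Ht. induction K; simpl; intros H; [lra|].
  destruct (Rlt_dec t (psum g K)) as [H'|H'].
  - destruct (IHK H') as [i [? ?]]. exists i; split; auto.
  - exists K. split; auto. simpl. lra.
Qed.

Lemma cfun_spec P L z t : is_pmf P -> is_decr_enum P L z -> 0 <= t < 1 ->
  exists k, valid_idx L k /\ psum (fun j => P (z j)) k <= t < psum (fun j => P (z j)) (S k)
   /\ cfun P L z t = ln (/ P (z k)).
Proof.
  intros HP HE Ht.
  destruct (enum_total P L z HP HE t ltac:(lra)) as [K [HK1 HK2]].
  destruct (find_idx _ t ltac:(lra) K HK2) as [i [Hi1 Hi2]].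
  assert (Hex : exists i, valid_idx L i /\
     psum (fun j => P (z j)) i <= t < psum (fun j => P (z j)) (S i)).
  { exists i. split; [apply HK1; lia|exact Hi2]. }
  pose proof (epsilon_spec (inhabits 0%nat) _ Hex) as Hs.
  destruct Hs as [Hs1 Hs2]. eexists. split; [exact Hs1|]. split; [exact Hs2|]. reflexivity.
Qed.

Lemma psum_ext_lt f g k : (forall a, (a < k)%nat -> f a = g a) -> psum f k = psum g k.
Proof. intros H; induction k; simpl; auto. rewrite IHk by (intros; apply H; lia). rewrite H by lia. reflexivity. Qed.

Lemma psum_atom (t : nat -> R) p K : (forall a, 0 <= t a) ->
  (forall i, (i < K)%nat -> t i = 0 \/ p <= t i) ->
  0 < psum t K -> p <= psum t K.
Proof.
  intros Hn. induction K; simpl; intros H Hp; [lra|].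
  pose proof (psum_nonneg t K Hn). pose proof (Hn K).
  destruct (Rlt_dec 0 (psum t K)) as [Hl|Hl].
  - assert (p <= psum t K) by (apply IHK; auto). lra.
  - destruct (H K ltac:(lia)); lra.
Qed.

Lemma main_ineq P Q LX LY zx zy phi eps delta k j :
  is_pmf P -> is_pmf Q -> is_decr_enum P LX zx -> is_decr_enum Q LY zy ->
  0 < eps -> 0 <= delta ->
  valid_idx LX k -> delta + eps < psum (fun i => P (zx i)) (S k) ->
  valid_idx LY j -> psum (fun i => Q (zy i)) j <= delta ->
  Q (zy j) < P (zx k) ->
  (1 - Q (zy j) / P (zx k)) * eps <= var_dist Q (push P phi).
Proof.
  intros HP HQ HEX HEY He Hd Hk HkS Hj Hjd Hqp.
  assert (Hp : 0 < P (zx k)) by (apply HEX; auto).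
  assert (Hq : 0 < Q (zy j)) by (apply HEY; auto).
  set (p := P (zx k)) in *. set (q := Q (zy j)) in *.
  set (u := q / p).
  assert (Hup : u * p = q) by (unfold u; field; lra).
  assert (Hu0 : 0 < u) by (unfold u; apply Rdiv_lt_0_compat; lra).
  assert (Hu1 : u < 1) by nra.
  set (r := 1 - u).
  set (K := S k).
  destruct (bound_exists (fun i => phi (zx i)) K) as [M HM].
  destruct (bound_exists zx K) as [M' HM'].
  set (w := fun b => psum (fun i => sel P phi b (zx i)) K).
  assert (Hnn : forall a, 0 <= P a) by apply HP.
  assert (F1 : forall b, 0 <= w b)
    by (intros; apply psum_nonneg; intros; apply sel_nonneg; auto).
  assert (F2 : forall b, w b <= push P phi b).
  { intros b. unfold w. rewrite psum_lsum, <- (lsum_map (sel P phi b) zx).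
    eapply Rle_trans.
    - apply (lsum_incl _ (map zx (seq 0 K)) (sel_nonneg P phi b HP) (seq 0 M')).
      + apply (enum_nodup P LX zx K HEX). intros i Hi.
        apply (valid_down LX i k); auto; unfold K in Hi; lia.
      + apply seq_NoDup.
      + intros a Ha. apply in_map_iff in Ha. destruct Ha as [i [<- Hi]].
        apply in_seq in Hi. apply in_seq. specialize (HM' i ltac:(lia)). lia.
    - rewrite <- psum_lsum. apply psum_le_lim; [apply sel_nonneg; auto|apply push_conv; auto]. }
  assert (F3 : forall b, 0 < w b -> p <= w b).
  { intros b. apply psum_atom.
    - intros; apply sel_nonneg; auto.
    - intros i Hi. unfold sel. destruct Nat.eq_dec; [right|left; auto].
      apply (enum_decr P LX zx HEX k Hk). unfold K in Hi; lia. }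
  assert (F4 : psum w M = psum (fun i => P (zx i)) K).
  { unfold w. rewrite psum_swap. apply psum_ext_lt. intros i Hi.
    unfold sel. rewrite psum_delta. destruct lt_dec as [|n]; [reflexivity|].
    exfalso; apply n; apply HM; auto. }
  assert (F5 : psum (fun b => if Rlt_dec q (Q b) then Q b else 0) M <= delta).
  { set (pb := fun b => if Rlt_dec q (Q b) then true else false).
    rewrite (psum_ext _ (fun b => if pb b then Q b else 0)).
    2:{ intros a. unfold pb. destruct Rlt_dec; reflexivity. }
    rewrite psum_lsum, lsum_filter.
    eapply Rle_trans; [|exact Hjd].
    rewrite psum_lsum, <- (lsum_map Q zy).
    apply lsum_incl.
    - apply HQ.
    - apply NoDup_filter, seq_NoDup.
    - apply (enum_nodup Q LY zy j HEY). intros i Hi. apply (valid_down LY i j); auto; lia.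
    - intros a Ha. apply filter_In in Ha. destruct Ha as [Ha Hb].
      unfold pb in Hb. destruct Rlt_dec as [Hqa|]; [|discriminate].
      pose proof HEY as HEY'. destruct HEY' as [_ [_ [Hc _]]].
      destruct (Hc a ltac:(lra)) as [i [Hvi Hzi]].
      apply in_map_iff. exists i. split; auto. apply in_seq.
      destruct (lt_dec i j); [lia|].
      exfalso. assert (Q (zy i) <= Q (zy j)).
      { apply (enum_decr Q LY zy HEY); auto; lia. }
      subst a. unfold q in Hqa. lra. }
  assert (F6 : psum (fun b => Rabs (Q b - push P phi b)) M <= var_dist Q (push P phi)).
  { apply psum_le_lim; [intros; apply Rabs_pos|apply vd_conv; auto]. }
  assert (T : forall b, r * w b <= r * (if Rlt_dec q (Q b) then Q b else 0)
                                  + Rabs (Q b - push P phi b)).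
  { intros b.
    assert (Habs: push P phi b - Q b <= Rabs (Q b - push P phi b))
      by (rewrite Rabs_minus_sym; apply Rle_abs).
    pose proof (F1 b). pose proof (F2 b). pose proof (Rabs_pos (Q b - push P phi b)).
    destruct (Rlt_dec q (Q b)).
    - assert (r * w b <= r * push P phi b) by (apply Rmult_le_compat_l; unfold r; lra).
      unfold r in *; nra.
    - destruct (Rlt_dec 0 (w b)) as [Hw|Hw].
      + pose proof (F3 b Hw).
        assert (u * p <= u * push P phi b) by (apply Rmult_le_compat_l; lra).
        assert (r * w b <= r * push P phi b) by (apply Rmult_le_compat_l; unfold r; lra).
        unfold r in *; nra.
      + assert (Hw0 : w b = 0) by lra. rewrite Hw0. unfold r; lra. }
  assert (Hsum : psum (fun b => r * w b) M <=
     psum (fun b => r * (if Rlt_dec q (Q b) then Q b else 0) + Rabs (Q b - push P phi b)) M).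
  { apply psum_le; intros; apply T. }
  rewrite psum_plus, !psum_scal, F4 in Hsum.
  change ((1 - u) * eps <= var_dist Q (push P phi)). fold r.
  assert (0 < r) by (unfold r; lra).
  fold K in HkS.
  assert (r * (delta + eps) <= r * psum (fun i => P (zx i)) K) by (apply Rmult_le_compat_l; lra).
  assert (r * psum (fun b => if Rlt_dec q (Q b) then Q b else 0) M <= r * delta)
    by (apply Rmult_le_compat_l; lra).
  lra.
Qed.

Theorem theorem2
  (PX PY : nat -> nat -> R)
  (hX : forall n, is_pmf (PX n)) (hY : forall n, is_pmf (PY n))
  (LX LY : nat -> option nat) (zX zY : nat -> nat -> nat)
  (hzX : forall n, is_decr_enum (PX n) (LX n) (zX n))
  (hzY : forall n, is_decr_enum (PY n) (LY n) (zY n))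
  (happrox : approximating PX PY) :
  forall eps, 0 < eps < 1 ->
  forall gamma, 0 < gamma ->
  exists N : nat, forall n : nat, (N <= n)%nat ->
  forall delta, 0 <= delta < 1 - eps ->
    cfun (PX n) (LX n) (zX n) (delta + eps) - cfun (PY n) (LY n) (zY n) delta >= - gamma.
Proof.
  intros eps Heps gamma Hg. destruct happrox as [phi Hphi].
  assert (He1 : exp (- gamma) < 1) by (rewrite <- exp_0; apply exp_increasing; lra).
  pose proof (exp_pos (- gamma)) as He0.
  destruct (Hphi (eps * (1 - exp (- gamma)))) as [N HN]; [nra|].
  exists N. intros n Hn delta Hd.
  specialize (HN n Hn). unfold Rdist in HN. rewrite Rminus_0_r in HN.
  apply Rabs_def2 in HN. destruct HN as [HN _].
  destruct (cfun_spec (PX n) (LX n) (zX n) (delta + eps) (hX n) (hzX n) ltac:(lra))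
    as [k [Hk [Hk2 ->]]].
  destruct (cfun_spec (PY n) (LY n) (zY n) delta (hY n) (hzY n) ltac:(lra))
    as [j [Hj [Hj2 ->]]].
  assert (Hp : 0 < PX n (zX n k)) by (apply (hzX n); auto).
  assert (Hq : 0 < PY n (zY n j)) by (apply (hzY n); auto).
  set (p := PX n (zX n k)) in *. set (q := PY n (zY n j)) in *.
  assert (Hlt : p * exp (- gamma) < q).
  { destruct (Rlt_dec q p) as [Hqp|Hqp].
    - pose proof (main_ineq (PX n) (PY n) (LX n) (LY n) (zX n) (zY n) (phi n) eps delta k j
        (hX n) (hY n) (hzX n) (hzY n) ltac:(lra) ltac:(lra) Hk ltac:(lra) Hj ltac:(lra) Hqp) as Hm.
      fold p q in Hm.
      set (u := q / p) in *.
      assert (Hup : u * p = q) by (unfold u; field; lra).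
      assert ((1 - u) * eps < eps * (1 - exp (- gamma))) by lra.
      assert (exp (- gamma) < u) by nra.
      nra.
    - nra. }
  rewrite !ln_Rinv by lra.
  assert (ln (p * exp (- gamma)) < ln q) by (apply ln_increasing; nra).
  rewrite ln_mult, ln_exp in H by lra. lra.
Qed.
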